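(* Let $n,k,p$ be non-negative integers with $p(k^2-1) \le n$, and let $\mathscr{F}$ be a family of $t$ graphs, each with $n$ vertices, $k$-colorable, and of pathwidth at most $p$. If $t \ge \max\{4k^2, 811\}$, then \[ \mathscr{U}(\mathscr{F}) ~<~ \frac{15}{7}\sqrt{t}\, n . \]
   Context: A graph $U$ is an induced-universal graph for a family $\mathscr{F}$ if every graph of $\mathscr{F}$ is isomorphic to an induced subgraph of $U$; $\mathscr{U}(\mathscr{F})$ is the smallest number of vertices of such a $U$. *)

(* Defs.v *)
From mathcomp Require Import all_boot all_order all_algebra.
Set Implicit Arguments. Unset Strict Implicit. Unset Printing Implicit Defensive.
Import Order.TTheory GRing.Theory Num.Theory.

Record sgraph (V : finType) := SGraph {
  adj : rel V;
  adj_sym : symmetric adj;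
  adj_irr : irreflexive adj }.

Definition induced_sub (V W : finType) (G : sgraph V) (U : sgraph W) : Prop :=
  exists f : V -> W, injective f /\ forall x y, adj U (f x) (f y) = adj G x y.

Definition induced_universal (I W : finType) (V : I -> finType)
  (F : forall i, sgraph (V i)) (U : sgraph W) : Prop :=
  forall i, induced_sub (F i) U.

Definition colorable (V : finType) (k : nat) (G : sgraph V) : Prop :=
  exists c : V -> 'I_k, forall x y, adj G x y -> c x != c y.

Definition path_decomposition (V : finType) (G : sgraph V) (B : seq {set V}) : Prop :=
  [/\ forall v, exists2 X, X \in B & v \in X,
      forall u v, adj G u v -> exists2 X, X \in B & (u \in X) && (v \in X)
    & forall v i j l, i <= j -> j <= l -> l < size B ->
        v \in nth set0 B i -> v \in nth set0 B l -> v \in nth set0 B j].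

Definition pathwidth_le (V : finType) (G : sgraph V) (p : nat) : Prop :=
  exists2 B, path_decomposition G B & forall X, X \in B -> #|X| <= p.+1.

(* m >= U(F): there is an induced-universal graph for F with m vertices.
   U(F) < b  iff  some m with universal_of_size F m satisfies m < b. *)
Definition universal_of_size (I : finType) (V : I -> finType)
  (F : forall i, sgraph (V i)) (m : nat) : Prop :=
  exists U : sgraph 'I_m, induced_universal F U.

(* Main.v *)
Require Import Defs.
From mathcomp Require Import all_boot all_order all_algebra.
Import Order.TTheory GRing.Theory Num.Theory.
From mathcomp Require Import ring lra zify.

(* Proof plan: affine-plane (Latin square over Z_q) block
   construction with q a prime slightly above sqrt t; the existence of a
   suitable prime is proved via Chebyshev-type bounds (a prime in (a, 4a/3]
   for a >= 15000) plus an explicit prime chain below 15000. *)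

Module Aux.
Set Implicit Arguments. Unset Strict Implicit. Unset Printing Implicit Defensive.

Lemma gper (M : nat) : M %/ 2 + M %/ 3 + M %/ 5 + (0 < M) <= M + M %/ 30 + (5 < M).
Proof. case: (posnP M) => [->//|H]; case: (ltnP 5 M) => H2 /=; lia. Qed.
Lemma gper2 (M : nat) : M + M %/ 30 <= M %/ 2 + M %/ 3 + M %/ 5 + (0 < M).
Proof. case: (posnP M) => [->//|H] /=; lia. Qed.

Definition Lc (m : nat) : nat := \prod_(p < m.+1 | prime p) p ^ trunc_log p m.

Lemma logn_prod q I (r : seq I) (P : pred I) (F : I -> nat) :
  (forall i, P i -> 0 < F i) ->
  logn q (\prod_(i <- r | P i) F i) = \sum_(i <- r | P i) logn q (F i).
Proof.
move=> Fpos.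
suff: 0 < \prod_(i <- r | P i) F i /\ 
      \sum_(i <- r | P i) logn q (F i) = logn q (\prod_(i <- r | P i) F i) by case.
elim/big_rec2: _ => [|i x y Pi [ypos ->]]; first by rewrite logn1.
by split; rewrite ?lognM ?muln_gt0 ?Fpos ?ypos.
Qed.

Lemma Lc_gt0 m : 0 < Lc m.
Proof. rewrite /Lc; elim/big_ind: _ => // [x y|i /prime_gt0 ?]; first by rewrite muln_gt0 => -> ->.
by rewrite expn_gt0; apply/orP; left. Qed.

Lemma logn_Lc q m : prime q -> logn q (Lc m) = trunc_log q m.
Proof.
move=> pq; rewrite /Lc logn_prod => [|i /prime_gt0 ?]; last by rewrite expn_gt0; apply/orP; left.
under eq_bigr => i pi do rewrite lognX logn_prime //.
case: (ltnP q m.+1) => qm.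
  rewrite (bigD1 (Ordinal qm)) //= eqxx muln1 big1 ?addn0 // => i /andP [_ ne].
  have -> : (q == i) = false by apply/negbTE; apply: contra ne => /eqP e; apply/eqP/val_inj; rewrite /= e.
  by rewrite muln0.
rewrite big1 => [|i _]; last by rewrite (_ : (q == i) = false) ?muln0 //; apply/eqP => e; move: (ltn_ord i); rewrite -e; lia.
apply/esym/eqP; rewrite trunc_log_eq0; apply/orP; right; lia.
Qed.

Lemma logn_fact_ext p m M : prime p -> m <= M ->
  logn p m`! = \sum_(1 <= k < M.+1) m %/ p ^ k.
Proof.
move=> pp mM; rewrite logn_fact // [RHS](big_cat_nat _ (n := m.+1)) ?ltnS //=.
rewrite [X in _ = _ + X]big_nat [X in _ = _ + X]big1 ?addn0 // => k /andP [k1 _].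
apply/divn_small; apply: (leq_trans k1); apply: ltnW; apply: ltn_expl; exact: prime_gt1.
Qed.

Lemma trunc_log_sum p m M : prime p -> m <= M ->
  trunc_log p m = \sum_(1 <= k < M.+1) (p ^ k <= m).
Proof.
move=> pp mM; have p1 := prime_gt1 pp.
case: (posnP m) => [->|m0].
  by rewrite trunc_log0 big_nat big1 // => k /andP [k1 _]; rewrite leqn0 expn_eq0; case: (p) p1.
have e := trunc_logP p1 m0; set e0 := trunc_log p m in e *.
have eM : e0 <= M by apply: leq_trans mM; apply: leq_trans e; apply: ltnW; apply: ltn_expl.
rewrite [RHS](big_cat_nat _ (n := e0.+1)) ?ltnS //=.
rewrite [X in _ = _ + X]big_nat [X in _ = _ + X]big1 ?addn0; last first.
  move=> k /andP [k1 _]; rewrite (_ : (p ^ k <= m) = false) //; apply/negbTE; rewrite -ltnNge.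
  exact: leq_trans (trunc_log_ltn m p1) (@leq_pexp2l p _ _ (prime_gt0 pp) k1).
rewrite big_nat (eq_bigr (fun _ => 1)) => [|k /andP [k1 k2]].
  by rewrite -big_nat sum_nat_const_nat subSS subn0 muln1.
by rewrite (leq_trans _ e) // leq_pexp2l // prime_gt0.
Qed.

Lemma dvdn_from_logn a b : 0 < a -> 0 < b ->
  (forall p, prime p -> logn p a <= logn p b) -> a %| b.
Proof.
move=> a0 b0 H; apply/dvdn_partP => // p; rewrite mem_primes => /and3P [pp _ _].
by rewrite p_part pfactor_dvdn // H.
Qed.

Definition Nn n := (30 * n)`! * n`!.
Definition Dn n := (15 * n)`! * (10 * n)`! * (6 * n)`!.

Lemma Nn_gt0 n : 0 < Nn n. Proof. by rewrite /Nn muln_gt0 !fact_gt0. Qed.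
Lemma Dn_gt0 n : 0 < Dn n. Proof. by rewrite /Dn !muln_gt0 !fact_gt0. Qed.

Lemma divMM c m d : 0 < c -> (c * m) %/ d %/ c = m %/ d.
Proof. by move=> c0; rewrite -divnMA [d * c]mulnC divnMl. Qed.

Lemma logn_Nn p n : prime p -> logn p (Nn n) =
  \sum_(1 <= k < (30 * n).+1) (30 * n %/ p ^ k + (30 * n %/ p ^ k) %/ 30).
Proof.
move=> pp; rewrite /Nn lognM ?fact_gt0 // !(@logn_fact_ext p _ (30 * n)) //; last by lia.
by rewrite -big_split /=; apply: eq_bigr => k _; rewrite divMM.
Qed.

Lemma logn_Dn p n : prime p -> logn p (Dn n) =
  \sum_(1 <= k < (30 * n).+1) ((30 * n %/ p ^ k) %/ 2 + (30 * n %/ p ^ k) %/ 3 + (30 * n %/ p ^ k) %/ 5).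
Proof.
move=> pp; rewrite /Dn !lognM; try by rewrite ?muln_gt0 ?fact_gt0.
rewrite !(@logn_fact_ext p _ (30 * n)) //; try lia.
rewrite -!big_split /=; apply: eq_bigr => k _.
by rewrite (_ : 30 * n = 2 * (15 * n)) ?divMM // (_ : 2 * (15 * n) = 3 * (10 * n)) ?divMM //
  (_ : 3 * (10 * n) = 5 * (6 * n)) ?divMM //; lia.
Qed.

Lemma logn_Lc_sum p m M : prime p -> m <= M ->
  logn p (Lc m) = \sum_(1 <= k < M.+1) (p ^ k <= m).
Proof. by move=> pp mM; rewrite logn_Lc // (trunc_log_sum pp mM). Qed.

Lemma dvdA n : Dn n * Lc (30 * n) %| Nn n * Lc (5 * n).
Proof.
have h1 := Nn_gt0 n; have h2 := Dn_gt0 n; have h3 := Lc_gt0 (30 * n); have h4 := Lc_gt0 (5 * n).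
apply: dvdn_from_logn => [|| p pp]; [by rewrite muln_gt0 h2 h3 | by rewrite muln_gt0 h1 h4 |].
rewrite (lognM _ h2 h3) (lognM _ h1 h4) logn_Nn // logn_Dn //.
rewrite !(@logn_Lc_sum p _ (30 * n)) //; last by lia.
rewrite -!big_split /=; apply: leq_sum => k _.
have pk0 : 0 < p ^ k by rewrite expn_gt0 prime_gt0.
have e1 : (p ^ k <= 30 * n) = (0 < 30 * n %/ p ^ k) by rewrite divn_gt0.
have e2 : (p ^ k <= 5 * n) = (5 < 30 * n %/ p ^ k).
  by rewrite leq_divRL // (_ : 30 * n = 6 * (5 * n)) ?leq_pmul2l //; lia.
rewrite e1 e2; exact: gper.
Qed.

Lemma dvdB n : Nn n %| Dn n * Lc (30 * n).
Proof.
have h1 := Nn_gt0 n; have h2 := Dn_gt0 n; have h3 := Lc_gt0 (30 * n).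
apply: dvdn_from_logn => [|| p pp]; [by [] | by rewrite muln_gt0 h2 h3 |].
rewrite (lognM _ h2 h3) logn_Nn // logn_Dn //.
rewrite !(@logn_Lc_sum p _ (30 * n)) //.
rewrite -!big_split /=; apply: leq_sum => k _.
have pk0 : 0 < p ^ k by rewrite expn_gt0 prime_gt0.
have e1 : (p ^ k <= 30 * n) = (0 < 30 * n %/ p ^ k) by rewrite divn_gt0.
rewrite e1; exact: gper2.
Qed.


Definition KK_ : nat := 2^14 * 3^9 * 5^5.
Lemma KK_lock : {K : nat | K = KK_}. Proof. by exists KK_. Qed.
Definition KK : nat := proj1_sig KK_lock.
Lemma KKE : KK = 2^14 * 3^9 * 5^5. Proof. exact: (proj2_sig KK_lock). Qed.

Lemma factD m k : (m + k)`! = m`! * \prod_(x <- iota 1 k) (m + x).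
Proof.
elim: k => [|k IH]; first by rewrite addn0 big_nil muln1.
rewrite addnS factS IH -[k.+1]addn1 iotaD big_cat big_seq1 /= add1n addnS; ring.
Qed.

Lemma match1 c xs ys : all2 leq xs ys ->
  \prod_(x <- xs) (c + x) <= \prod_(y <- ys) (c + y).
Proof.
elim: xs ys => [|x xs IH] [|y ys] //= /andP [xy h].
by rewrite !big_cons leq_mul // ?leq_add2l // IH.
Qed.

Fixpoint dd (xs ys : seq nat) : nat :=
  match xs, ys with x :: xs', y :: ys' => (y == x.+1) + dd xs' ys' | _, _ => 0 end.

Lemma match2 c xs ys :
  all2 (fun x y => (y == x) || ((y == x.+1) && (0 < x))) xs ys ->
  \prod_(y <- ys) (c + y) * (c + 1) ^ (dd xs ys) <= \prod_(x <- xs) (c + x) * (c + 2) ^ (dd xs ys).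
Proof.
elim: xs ys => [|x xs IH] [|y ys] //= /andP [h1 h2].
rewrite !big_cons !expnD.
case/orP: h1 => [/eqP ->|/andP [/eqP -> x0]].
  have -> : (x == x.+1) = false by elim: x {IH h2}.
  by rewrite !expn0 !mul1n -!mulnA leq_mul2l (IH _ h2) orbT.
rewrite eqxx !expn1.
have h : (c + x.+1) * (c + 1) <= (c + x) * (c + 2) by nia.
move: (IH _ h2) => {}IH.
set A := \prod_(j <- ys) (c + j) in IH *; set B := \prod_(j <- xs) (c + j) in IH *.
set D := dd xs ys in IH *.
have -> : (c + x.+1) * A * ((c + 1) * (c + 1) ^ D) = ((c + x.+1) * (c + 1)) * (A * (c + 1) ^ D) by ring.
have -> : (c + x) * B * ((c + 2) * (c + 2) ^ D) = ((c + x) * (c + 2)) * (B * (c + 2) ^ D) by ring.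
exact: leq_mul.
Qed.

Definition Xl := iota 1 30 ++ [:: 30].
Definition Y0 := map (muln 2) (iota 1 15) ++ map (muln 3) (iota 1 10) ++ map (muln 5) (iota 1 6).
Definition Ys := sort leq Y0.

Lemma Xl_Ys : all2 leq Xl Ys. Proof. by vm_compute. Qed.
Lemma Xl_Ys2 : all2 (fun x y => (y == x) || ((y == x.+1) && (0 < x))) Xl Ys. Proof. by vm_compute. Qed.
Lemma dd_XY : dd Xl Ys = 15. Proof. by vm_compute. Qed.
Lemma perm_Y : perm_eq Ys Y0. Proof. exact: perm_sort. Qed.

Lemma prod_scale (a : nat) (s : seq nat) (F : nat -> nat) :
  \prod_(x <- s) (a * F x) = a ^ size s * \prod_(x <- s) F x.
Proof. elim: s => [|x s IH]; rewrite ?big_nil ?big_cons ?IH //= expnS; ring. Qed.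

Definition An n := \prod_(x <- iota 1 30) (30 * n + x) * n.+1.
Definition Bn n := \prod_(x <- iota 1 15) (15 * n + x) * \prod_(x <- iota 1 10) (10 * n + x) *
   \prod_(x <- iota 1 6) (6 * n + x).

Lemma An_X n : 30 * An n = \prod_(x <- Xl) (30 * n + x).
Proof. rewrite /An /Xl big_cat big_seq1 /=; ring. Qed.

Lemma Bn_Y n : 30 * KK * Bn n = \prod_(y <- Y0) (30 * n + y).
Proof.
rewrite /Bn /Y0 !big_cat !big_map /=.
have e : forall a m s, \prod_(x <- s) (a * m + a * x) = a ^ size s * \prod_(x <- s) (m + x).
  by move=> a m s; rewrite -prod_scale; apply: eq_bigr => x _; rewrite mulnDr.
have -> : 30 * n = 2 * (15 * n) by ring.
rewrite e (_ : 2 * (15 * n) = 3 * (10 * n)); last by ring.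
rewrite e (_ : 3 * (10 * n) = 5 * (6 * n)); last by ring.
rewrite e KKE /=; ring.
Qed.

Lemma Nn_S n : Nn n.+1 = Nn n * An n.
Proof. rewrite /Nn /An mulnS addnC factD factS; ring. Qed.

Lemma Dn_S n : Dn n.+1 = Dn n * Bn n.
Proof. rewrite /Dn /Bn !mulnS ![_ + _ * n]addnC !factD; ring. Qed.

Lemma An_le n : An n <= KK * Bn n.
Proof.
have h30 : 0 < 30 by [].
rewrite -(leq_pmul2l h30). rewrite mulnA. rewrite An_X. rewrite Bn_Y. rewrite -(perm_big _ perm_Y).
exact: match1 Xl_Ys.
Qed.

Lemma An_ge n : KK * Bn n * (30 * n + 1) ^ 15 <= An n * (30 * n + 2) ^ 15.
Proof.
have h30 : 0 < 30 by [].
rewrite -(leq_pmul2l h30) [30 * (KK * _ * _)]mulnA [30 * (KK * _)]mulnA [30 * (An n * _)]mulnA.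
rewrite An_X Bn_Y -(perm_big _ perm_Y).
by have := match2 (30 * n) Xl_Ys2; rewrite dd_XY.
Qed.

Lemma boundC n : Nn n <= KK ^ n * Dn n.
Proof.
elim: n => [|n IH]; first by rewrite /Nn /Dn !muln0.
rewrite Nn_S Dn_S expnS.
have -> : KK * KK ^ n * (Dn n * Bn n) = (KK ^ n * Dn n) * (KK * Bn n) by ring.
exact: leq_mul IH (An_le n).
Qed.

Definition P1 n := \prod_(m < n) (30 * m + 1).
Definition P2 n := \prod_(m < n) (30 * m + 2).

Lemma boundD0 n : KK ^ n * Dn n * P1 n ^ 15 <= Nn n * P2 n ^ 15.
Proof.
elim: n => [|n IH]; first by rewrite /Nn /Dn /P1 /P2 !big_ord0 !muln0.
rewrite Nn_S Dn_S expnS /P1 /P2 !big_ord_recr /= -/(P1 n) -/(P2 n) !expnMn.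
have -> : KK * KK ^ n * (Dn n * Bn n) * (P1 n ^ 15 * (30 * n + 1) ^ 15) =
  (KK ^ n * Dn n * P1 n ^ 15) * (KK * Bn n * (30 * n + 1) ^ 15) by ring.
have -> : Nn n * An n * (P2 n ^ 15 * (30 * n + 2) ^ 15) =
  (Nn n * P2 n ^ 15) * (An n * (30 * n + 2) ^ 15) by ring.
exact: leq_mul IH (An_ge n).
Qed.

Lemma P12 n : P2 n.+1 <= 2 * n.+1 * P1 n.+1.
Proof.
elim: n => [|n IH]; first by rewrite /P1 /P2 !big_ord_recr !big_ord0.
rewrite /P1 /P2 big_ord_recr [X in _ <= _ * X]big_ord_recr /= -/(P1 n.+1) -/(P2 n.+1).
apply: (leq_trans (leq_mul IH (leqnn _))).
have h : n.+1 * (30 * n.+1 + 2) <= n.+2 * (30 * n.+1 + 1) by nia.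
have -> : 2 * n.+1 * P1 n.+1 * (30 * n.+1 + 2) = 2 * P1 n.+1 * (n.+1 * (30 * n.+1 + 2)) by ring.
have -> : 2 * n.+2 * (P1 n.+1 * (30 * n.+1 + 1)) = 2 * P1 n.+1 * (n.+2 * (30 * n.+1 + 1)) by ring.
by rewrite leq_mul2l h orbT.
Qed.

Lemma P1_gt0 n : 0 < P1 n.
Proof. by rewrite /P1; elim/big_ind: _ => // [x y hx hy|i _]; rewrite ?muln_gt0 ?hx ?hy ?addn1. Qed.

Lemma boundD n : 0 < n -> KK ^ n * Dn n <= (2 * n) ^ 15 * Nn n.
Proof.
case: n => // n _.
have h0 := boundD0 n.+1.
have h : P2 n.+1 ^ 15 <= (2 * n.+1) ^ 15 * P1 n.+1 ^ 15 by rewrite -expnMn leq_exp2r // P12.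
have hp : 0 < P1 n.+1 ^ 15 by rewrite expn_gt0 P1_gt0.
rewrite -(leq_pmul2r hp); apply: (leq_trans h0).
by rewrite (mulnC ((2 * n.+1) ^ 15)) -mulnA leq_mul2l h orbT.
Qed.


Lemma Lc_dvd m m' : m <= m' -> Lc m %| Lc m'.
Proof.
move=> mm; apply: dvdn_from_logn; rewrite ?Lc_gt0 // => p pp.
by rewrite !logn_Lc // leq_trunc_log.
Qed.

Lemma Lc_mono m m' : m <= m' -> Lc m <= Lc m'.
Proof. by move=> mm; apply: dvdn_leq; [exact: Lc_gt0 | exact: Lc_dvd]. Qed.

Lemma KK_gt1 : 1 < KK. Proof. by rewrite KKE. Qed.
Lemma KK_gt0 : 0 < KK. Proof. by rewrite KKE. Qed.

Lemma boundU n : Lc (30 * n) <= KK ^ n * Lc (5 * n).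
Proof.
have p1 : 0 < Nn n * Lc (5 * n) by rewrite muln_gt0 Nn_gt0 Lc_gt0.
have h := dvdn_leq p1 (dvdA n).
have h2 := boundC n.
have hD := Dn_gt0 n.
rewrite -(leq_pmul2l hD); apply: (leq_trans h).
rewrite mulnA (mulnC (Dn n)); exact: leq_mul h2 (leqnn _).
Qed.

Lemma boundLo n : 0 < n -> KK ^ n <= (2 * n) ^ 15 * Lc (30 * n).
Proof.
move=> n0; have p1 : 0 < Dn n * Lc (30 * n) by rewrite muln_gt0 Dn_gt0 Lc_gt0.
have h := dvdn_leq p1 (dvdB n).
have h2 := boundD n0.
have hD := Dn_gt0 n.
rewrite -(leq_pmul2r hD); apply: (leq_trans h2).
by rewrite -mulnA leq_mul2l [Lc _ * _]mulnC h orbT.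
Qed.

Lemma Lc_fact m : Lc m %| m`!.
Proof.
apply: dvdn_from_logn; rewrite ?Lc_gt0 ?fact_gt0 // => p pp.
rewrite (logn_Lc_sum pp (leqnn m)) (logn_fact_ext pp (leqnn m)).
apply: leq_sum => k _; case: (leqP (p ^ k) m) => // h.
by rewrite divn_gt0 // expn_gt0 prime_gt0.
Qed.

Lemma Lc5 : Lc 5 <= 120.
Proof. by apply: dvdn_leq => //; exact: Lc_fact. Qed.

Lemma K120 : 120 ^ 4 <= KK.
Proof.
have l3 : forall (a b c : nat), (a^3 * b * c)^4 = a^12 * b^4 * c^4 by move=> a b c; ring.
have e : 120 ^ 4 = 2^12 * 3^4 * 5^4 by rewrite -l3; congr (_ ^ _).
rewrite e KKE; apply: leq_mul; [apply: leq_mul|]; apply: leq_pexp2l => //.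
Qed.

Lemma Lc30 : Lc 30 ^ 4 <= KK ^ 5.
Proof.
have h := boundU 1; rewrite muln1 expn1 in h.
have h2 : Lc 30 <= KK * 120 by apply: (leq_trans h); rewrite leq_mul2l Lc5 orbT.
apply: (leq_trans (_ : _ <= (KK * 120) ^ 4)); first by rewrite leq_exp2r.
by rewrite expnMn (expnS KK 4) (mulnC KK (KK ^ 4)) leq_mul2l K120 orbT.
Qed.

Lemma boundUp n : Lc (30 * n) ^ 4 <= KK ^ (5 * n + 25).
Proof.
elim/ltn_ind: n => n IH.
case: (posnP n) => [->|n0].
  have h0 : Lc 0 <= 1 by apply: dvdn_leq => //; exact: Lc_fact.
  rewrite muln0; apply: (leq_trans (_ : _ <= 1 ^ 4)); first by rewrite leq_exp2r.
  by rewrite exp1n expn_gt0 KK_gt0.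
set m := (n + 5) %/ 6.
have hm : 5 * n <= 30 * m by rewrite /m; lia.
have h1 : Lc (30 * n) ^ 4 <= KK ^ (4 * n) * Lc (30 * m) ^ 4.
  rewrite (mulnC 4 n) expnM -expnMn leq_exp2r //.
  by apply: (leq_trans (boundU n)); rewrite leq_mul2l (Lc_mono hm) orbT.
apply: (leq_trans h1).
case: (leqP 25 n) => n25.
  have hm2 : m < n by rewrite /m; lia.
  apply: (leq_trans (leq_mul (leqnn _) (IH m hm2))).
  by rewrite -expnD leq_pexp2l ?KK_gt0 //; rewrite /m; lia.
have m0 : 0 < m by rewrite /m; lia.
have h2 : Lc (30 * m) ^ 4 <= KK ^ (4 * m) * Lc 30 ^ 4.
  rewrite (mulnC 4 m) expnM -expnMn leq_exp2r //.
  apply: (leq_trans (boundU m)); rewrite leq_mul2l; apply/orP; right.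
  by apply: Lc_mono; rewrite /m; lia.
apply: (leq_trans (leq_mul (leqnn _) h2)).
apply: (leq_trans (leq_mul (leqnn _) (leq_mul (leqnn _) Lc30))).
by rewrite -!expnD leq_pexp2l ?KK_gt0 //; rewrite /m; lia.
Qed.

Lemma prime_free a b s : 0 < a -> b < 2 * a ->
  (forall p, prime p -> a < p -> b < p) ->
  (forall p, prime p -> p * p <= b -> p <= s) -> Lc b %| Lc a * Lc s.
Proof.
move=> a0 ba nop sq; apply: dvdn_from_logn; rewrite ?muln_gt0 ?Lc_gt0 // => p pp.
have p1 := prime_gt1 pp.
rewrite lognM ?Lc_gt0 // !logn_Lc //.
set e := trunc_log p b.
case: (posnP e) => [->//|e0].
have b0 : 0 < b by move: e0; rewrite trunc_log_gt0; lia.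
have pe : p ^ e <= b := trunc_logP p1 b0.
case: (leqP (p ^ e) a) => hpa.
  by apply: leq_trans (leq_addr _ _); apply: trunc_log_max.
case: e e0 pe hpa => [//|[|e']] _ pe hpa.
  by move: (nop p pp); rewrite expn1 in pe hpa; move/(_ hpa); lia.
have hp2 : p * p <= b by apply: leq_trans pe; rewrite mulnn; apply: leq_pexp2l => //; lia.
have ps := sq p pp hp2.
have h1 : 1 <= trunc_log p s by rewrite trunc_log_gt0 p1 /=; lia.
have h2 : e'.+1 <= trunc_log p a.
  apply: trunc_log_max => //.
  have : p ^ e'.+1 * 2 <= p ^ e'.+2 by rewrite [X in _ <= X]expnSr leq_mul2l p1 orbT.
  lia.
by rewrite -addn1 leq_add.
Qed.

Lemma lin60 l : 10 <= l -> 60 * l.+1 <= 2 ^ l.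
Proof.
elim: l => // l IH; rewrite leq_eqVlt => /orP [/eqP <-//|].
rewrite ltnS => /IH h; rewrite expnS; lia.
Qed.

Lemma pow_poly N : 512 <= N -> (2 * N) ^ 60 <= 2 ^ (2 * N).
Proof.
move=> N512; set l := trunc_log 2 (2 * N).
have h1 : 2 * N < 2 ^ l.+1 := trunc_log_ltn (2 * N) (isT : 1 < 2).
have N0 : 0 < 2 * N by lia.
have h2 : 2 ^ l <= 2 * N := trunc_logP (isT : 1 < 2) N0.
have l10 : 10 <= l by apply: trunc_log_max => //; rewrite (_ : 2 ^ 10 = 1024) //; lia.
apply: (leq_trans (_ : _ <= (2 ^ l.+1) ^ 60)); first by rewrite leq_exp2r // ltnW.
rewrite -expnM; apply: leq_pexp2l => //.
rewrite mulnC; exact: leq_trans (lin60 l10) h2.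
Qed.

Lemma K39 : 2 ^ 39 <= KK.
Proof.
have e : 2 ^ 39 = 2 ^ 14 * 2 ^ 14 * 2 ^ 11 by rewrite -!expnD.
rewrite e KKE; apply: leq_mul; [apply: leq_mul|].
- exact: leqnn.
- have a : 2 ^ 14 = 16384 by []. have b : 3 ^ 9 = 19683 by [].
  by rewrite a b.
- have a : 2 ^ 11 = 2048 by []. have b : 5 ^ 5 = 3125 by [].
  by rewrite a b.
Qed.

Lemma pow2K N : 84 <= N -> 2 ^ (2 * N) <= KK ^ (N %/ 16).
Proof.
move=> N84; apply: (leq_trans (_ : _ <= 2 ^ (39 * (N %/ 16)))).
  by rewrite leq_pexp2l //; lia.
by rewrite expnM leq_exp2r ?K39 //; lia.
Qed.

Lemma big_prime a : 150 * 100 <= a -> exists2 q, prime q & a < q <= (4 * a) %/ 3.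
Proof.
move=> a15; have [b eb] : exists b, b = (4 * a) %/ 3 by eexists.
rewrite -eb.
case: (pickP (fun p : 'I_b.+1 => prime p && (a < p))) => [p /andP [pp ap]|none].
  by exists p => //; rewrite ap /= -ltnS ltn_ord.
have nop : forall p, prime p -> a < p -> b < p.
  move=> p pp ap; case: (leqP p b) => // pb.
  by have := none (Ordinal (pb : p < b.+1)); rewrite /= pp ap.
have [N eN] : exists N, N = b %/ 30 by eexists.
have [n1 en1] : exists n1, n1 = (a + 29) %/ 30 by eexists.
have [s es] : exists s, s = a %/ 100 by eexists.
have [n2 en2] : exists n2, n2 = (s + 29) %/ 30 by eexists.
have hsq : forall p, prime p -> p * p <= b -> p <= s.
  move=> p pp hp; case: (leqP p s) => // ps.
  have p151 : 151 <= p by lia.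
  have : 151 * p <= p * p by rewrite leq_mul2r p151 orbT.
  lia.
have a0 : 0 < a by lia.
have ba : b < 2 * a by lia.
have dv := prime_free a0 ba nop hsq.
have hLb : Lc b <= Lc (30 * n1) * Lc (30 * n2).
  apply: (leq_trans (dvdn_leq _ dv)); first by rewrite muln_gt0 !Lc_gt0.
  by apply: leq_mul; apply: Lc_mono; lia.
have N0 : 0 < N by lia.
have hN : KK ^ N <= (2 * N) ^ 15 * Lc b.
  apply: (leq_trans (boundLo N0)); rewrite leq_mul2l; apply/orP; right.
  by apply: Lc_mono; lia.
have h4 : KK ^ (4 * N) <= (2 * N) ^ 60 * (Lc (30 * n1) ^ 4 * Lc (30 * n2) ^ 4).
  have e60 : (2 * N) ^ 60 = ((2 * N) ^ 15) ^ 4 by rewrite -expnM.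
  rewrite (mulnC 4 N) expnM e60 -(expnMn (Lc (30 * n1)) (Lc (30 * n2)) 4).
  rewrite -(expnMn ((2 * N) ^ 15) (Lc (30 * n1) * Lc (30 * n2)) 4) leq_exp2r //.
  by apply: (leq_trans hN); rewrite leq_mul2l hLb orbT.
have h5 : (2 * N) ^ 60 <= KK ^ (N %/ 16).
  have hN512 : 512 <= N by clear -a15 eb eN; lia.
  have hN84 : 84 <= N by clear -a15 eb eN; lia.
  exact: leq_trans (pow_poly hN512) (pow2K hN84).
have h6 := leq_mul h5 (leq_mul (boundUp n1) (boundUp n2)).
have h7 := leq_trans h4 h6.
rewrite -!expnD leq_exp2l ?KK_gt1 // in h7.
clear -h7 a15 eb eN en1 es en2; lia.
Qed.


Lemma mono_aux p a X : p <= a -> a + p <= X -> p * (X - p) <= a * (X - a).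
Proof.
move=> pa aX.
have [d ed] : exists d, a = p + d by exists (a - p); lia.
have [e ee] : exists e, X = p + d + p + e by exists (X - (p + d + p)); lia.
subst a X.
rewrite (_ : p + d + p + e - p = p + d + e); last by lia.
rewrite (_ : p + d + p + e - (p + d) = p + e); last by lia.
have E : (p + d) * (p + e) = p * (p + d + e) + d * e by ring.
by rewrite E leq_addr.
Qed.

Lemma C_mono p a q : p <= a -> a < q ->
  14 * q * (q + 2) < 15 * p * (2 * q + 4 - p) -> 14 * q * (q + 2) < 15 * a * (2 * q + 4 - a).
Proof.
move=> pa aq h; apply: (leq_trans h).
rewrite -!mulnA leq_mul2l; apply/orP; right; apply: mono_aux => //; lia.
Qed.

Lemma C_big a q : a < q -> 3 * q <= 4 * a -> 14 * q * (q + 2) < 15 * a * (2 * q + 4 - a).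
Proof.
move=> aq q4.
have [d ed] : exists d, q = a + d by exists (q - a); lia.
subst q.
have d1 : 1 <= d by lia.
have ad : 3 * d <= a by lia.
rewrite (_ : 2 * (a + d) + 4 - a = a + 2 * d + 4); last by lia.
have h1 : 9 * (d * d) <= a * a by have := leq_mul ad ad; rewrite mulnACA.
have h2 : 3 * (d * d) <= a * d by rewrite mulnA leq_mul2r ad orbT.
have E1 : 14 * (a + d) * (a + d + 2) = 14 * (a * a) + 28 * (a * d) + 14 * (d * d) + 28 * a + 28 * d by ring.
have E2 : 15 * a * (a + 2 * d + 4) = 15 * (a * a) + 30 * (a * d) + 60 * a by ring.
rewrite E1 E2; lia.
Qed.


Definition Cgood a := exists2 q, prime q & a < q /\ 14 * q * (q + 2) < 15 * a * (2 * q + 4 - a).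

Lemma step p q a : prime q -> 14 * q * (q + 2) < 15 * p * (2 * q + 4 - p) -> p <= a -> a < q -> Cgood a.
Proof. by move=> pq h pa aq; exists q => //; split => //; exact: C_mono h. Qed.

Lemma small_range a : 28 <= a -> a < 150 * 100 -> Cgood a.
Proof.
move=> a28 a15.
case: (ltnP a 29) => h29.
  apply: (@step 28 29) => [|||]; [by vm_compute | lia | lia | lia].

case: (ltnP a 41) => h41.
  apply: (@step 29 41) => [|||]; [by vm_compute | lia | lia | lia].

case: (ltnP a 53) => h53.
  apply: (@step 41 53) => [|||]; [by vm_compute | lia | lia | lia].

case: (ltnP a 73) => h73.
  apply: (@step 53 73) => [|||]; [by vm_compute | lia | lia | lia].

case: (ltnP a 97) => h97.
  apply: (@step 73 97) => [|||]; [by vm_compute | lia | lia | lia].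

case: (ltnP a 131) => h131.
  apply: (@step 97 131) => [|||]; [by vm_compute | lia | lia | lia].

case: (ltnP a 179) => h179.
  apply: (@step 131 179) => [|||]; [by vm_compute | lia | lia | lia].

case: (ltnP a 241) => h241.
  apply: (@step 179 241) => [|||]; [by vm_compute | lia | lia | lia].

case: (ltnP a 317) => h317.
  apply: (@step 241 317) => [|||]; [by vm_compute | lia | lia | lia].

case: (ltnP a 421) => h421.
  apply: (@step 317 421) => [|||]; [by vm_compute | lia | lia | lia].

case: (ltnP a 569) => h569.
  apply: (@step 421 569) => [|||]; [by vm_compute | lia | lia | lia].

case: (ltnP a 769) => h769.
  apply: (@step 569 769) => [|||]; [by vm_compute | lia | lia | lia].

case: (ltnP a 1039) => h1039.
  apply: (@step 769 1039) => [|||]; [by vm_compute | lia | lia | lia].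

case: (ltnP a 1399) => h1399.
  apply: (@step 1039 1399) => [|||]; [by vm_compute | lia | lia | lia].

case: (ltnP a 1879) => h1879.
  apply: (@step 1399 1879) => [|||]; [by vm_compute | lia | lia | lia].

case: (ltnP a 2531) => h2531.
  apply: (@step 1879 2531) => [|||]; [by vm_compute | lia | lia | lia].

case: (ltnP a 3413) => h3413.
  apply: (@step 2531 3413) => [|||]; [by vm_compute | lia | lia | lia].

case: (ltnP a 4603) => h4603.
  apply: (@step 3413 4603) => [|||]; [by vm_compute | lia | lia | lia].

case: (ltnP a (62 * 100 + 3)) => h6203.
  apply: (@step 4603 (62 * 100 + 3)) => [|||]; [by vm_compute | lia | lia | lia].

case: (ltnP a (83 * 100 + 63)) => h8363.
  apply: (@step (62 * 100 + 3) (83 * 100 + 63)) => [|||]; [by vm_compute | lia | lia | lia].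

case: (ltnP a (112 * 100 + 73)) => h11273.
  apply: (@step (83 * 100 + 63) (112 * 100 + 73)) => [|||]; [by vm_compute | lia | lia | lia].

apply: (@step (112 * 100 + 73) (151 * 100 + 99)) => [|||]; [by vm_compute | lia | lia | lia].
Qed.


Lemma prime_for a : 28 <= a -> Cgood a.
Proof.
move=> a28; case: (ltnP a (150 * 100)) => h; first exact: small_range.
have [q pq /andP [aq qa]] := big_prime h.
exists q => //; split => //; apply: C_big => //.
have : 3 * ((4 * a) %/ 3) <= 4 * a by rewrite mulnC leq_trunc_div.
lia.
Qed.


Lemma mod_cancel q d x y : prime q -> 0 < d < q -> x < q -> y < q ->
  d * x = d * y %[mod q] -> x = y.
Proof.
move=> pq /andP [d0 dq] xq yq.
wlog yx : x y xq yq / y <= x => [W|] h.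
  case: (leqP y x) => [yx|xy]; first exact: W.
  by apply/esym/W => //; apply: ltnW.
move/eqP: h; rewrite eqn_mod_dvd ?leq_mul2l ?yx ?orbT // -mulnBr Gauss_dvdr; last first.
  by rewrite prime_coprime // gtnNdvd.
move=> hd; have lt : x - y < q by lia.
case: (posnP (x - y)) => [e|pos]; first lia.
have := dvdn_leq pos hd; lia.
Qed.

Definition blk (q : nat) (i : nat) (j : nat) : nat :=
  if j < q then (i %% q + j * (i %/ q)) %% q else i %/ q.

Lemma blk_lt q i j : 0 < q -> i < q * q -> blk q i j < q.
Proof. by move=> q0 iq; rewrite /blk; case: ifP => _; [rewrite ltn_mod | rewrite ltn_divLR // mulnC]. Qed.

Lemma blk_inj q i i' j1 j2 : prime q -> i < q * q -> i' < q * q -> j1 < j2 -> j2 <= q ->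
  blk q i j1 = blk q i' j1 -> blk q i j2 = blk q i' j2 -> i = i'.
Proof.
move=> pq iq iq' j12 j2q.
have q0 := prime_gt0 pq.
have cq : i %/ q < q by rewrite ltn_divLR // mulnC.
have cq' : i' %/ q < q by rewrite ltn_divLR // mulnC.
have rq : i %% q < q by rewrite ltn_mod.
have rq' : i' %% q < q by rewrite ltn_mod.
have j1q : j1 < q by lia.
rewrite /blk j1q => h1 h2.
suff [ec er] : i %/ q = i' %/ q /\ i %% q = i' %% q.
  by rewrite (divn_eq i q) (divn_eq i' q) ec er.
case: (ltnP j2 q) => j2q'.
- rewrite j2q' in h2.
  have ec : i %/ q = i' %/ q.
    apply: (@mod_cancel q (j2 - j1)) => //; first by lia.
    have e2 : j2 = j1 + (j2 - j1) by lia.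
    set d := j2 - j1 in e2 *.
    have e1 : (i %% q + j2 * (i %/ q)) %% q = ((i %% q + j1 * (i %/ q)) %% q + d * (i %/ q)) %% q.
      by rewrite [RHS]modnDml e2 mulnDl addnA.
    have e1' : (i' %% q + j2 * (i' %/ q)) %% q = ((i' %% q + j1 * (i' %/ q)) %% q + d * (i' %/ q)) %% q.
      by rewrite [RHS]modnDml e2 mulnDl addnA.
    rewrite e1 e1' h1 in h2.
    by apply/eqP; move/eqP: h2; rewrite eqn_modDl.
  split => //.
  move: h1; rewrite ec => /eqP; rewrite eqn_modDr => /eqP.
  by rewrite !modn_mod.
- have j2e : j2 = q by lia.
  rewrite j2e ltnn in h2.
  split => //.
  move: h1; rewrite h2 => /eqP; rewrite eqn_modDr => /eqP.
  by rewrite !modn_mod.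
Qed.

Definition cls n k (col : 'I_n -> 'I_k) (a : 'I_k) : {set 'I_n} := [set u | col u == a].
Definition rk n k (col : 'I_n -> 'I_k) (v : 'I_n) : nat := index v (enum (cls col (col v))).
Definition cdiv x b := (x + b.-1) %/ b.
Definition Soff n k (col : 'I_n -> 'I_k) b (a : nat) : nat :=
  \sum_(a' < k | a' < a) cdiv #|cls col a'| b.
Definition Ppos n k (col : 'I_n -> 'I_k) b (v : 'I_n) := Soff col b (col v) * b + rk col v.

Lemma rk_lt n k (col : 'I_n -> 'I_k) v : rk col v < #|cls col (col v)|.
Proof. by rewrite /rk cardE index_mem mem_enum inE. Qed.

Lemma rk_inj n k (col : 'I_n -> 'I_k) v w : col v = col w -> rk col v = rk col w -> v = w.
Proof.
rewrite /rk => e; rewrite e => h.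
have vin : v \in enum (cls col (col w)) by rewrite mem_enum inE e.
have win : w \in enum (cls col (col w)) by rewrite mem_enum inE.
by rewrite -(nth_index v vin) h nth_index.
Qed.

Lemma cdiv_ge x b : 0 < b -> x <= cdiv x b * b.
Proof. rewrite /cdiv => b0; have := divn_eq (x + b.-1) b; have := ltn_pmod (x + b.-1) b0; lia. Qed.

Lemma Soff_step n k (col : 'I_n -> 'I_k) b (a : 'I_k) (a' : nat) : a < a' ->
  Soff col b a + cdiv #|cls col a| b <= Soff col b a'.
Proof.
move=> aa; rewrite /Soff !(big_mkcond (fun x : 'I_k => x < _)) /=.
have -> : cdiv #|cls col a| b = \sum_(x < k) (if x == a then cdiv #|cls col x| b else 0).
  by rewrite -big_mkcond big_pred1_eq.
rewrite -big_split /=; apply: leq_sum => x _.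
case: (ltnP x a) => xa.
  rewrite (ltn_trans xa aa); case: eqP => [e|_]; last by rewrite addn0.
  by rewrite e ltnn in xa.
rewrite add0n; case: eqP => [->|_]; first by rewrite aa.
by case: ifP.
Qed.

Lemma Fam_eq n k (col : 'I_n -> 'I_k) b v : 0 < b ->
  Ppos col b v %/ b = Soff col b (col v) + rk col v %/ b.
Proof. by move=> b0; rewrite /Ppos divnMDl. Qed.

Lemma Fam_lo n k (col : 'I_n -> 'I_k) b v : 0 < b -> Soff col b (col v) <= Ppos col b v %/ b.
Proof. by move=> b0; rewrite Fam_eq // leq_addr. Qed.

Lemma Fam_hi n k (col : 'I_n -> 'I_k) b v : 0 < b ->
  Ppos col b v %/ b < Soff col b (col v) + cdiv #|cls col (col v)| b.
Proof.
move=> b0; rewrite Fam_eq // ltn_add2l ltn_divLR //.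
exact: leq_trans (rk_lt col v) (cdiv_ge _ b0).
Qed.

Lemma Fam_tot n k (col : 'I_n -> 'I_k) b v : 0 < b -> Ppos col b v %/ b < Soff col b k.
Proof. by move=> b0; apply: leq_trans (Fam_hi col v b0) (Soff_step _ _ _). Qed.

Lemma Fam_neq n k (col : 'I_n -> 'I_k) b v w : 0 < b -> col v != col w ->
  Ppos col b v %/ b != Ppos col b w %/ b.
Proof.
move=> b0 ne.
wlog lt : v w ne / col v < col w => [W|].
  case: (ltngtP (col v) (col w)) => h; first exact: W.
    by rewrite eq_sym; apply: W => //; rewrite eq_sym.
  by move: ne; rewrite (val_inj h) eqxx.
rewrite neq_ltn; apply/orP; left.
apply: leq_trans (Fam_hi col v b0) _.
exact: leq_trans (Soff_step col b lt) (Fam_lo col w b0).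
Qed.

Lemma Ppos_inj n k (col : 'I_n -> 'I_k) b v w : 0 < b -> Ppos col b v = Ppos col b w -> v = w.
Proof.
move=> b0 e.
have ec : col v = col w.
  apply/eqP; apply: contraTT (eqxx (Ppos col b v %/ b)) => ne.
  by rewrite {2}e; exact: Fam_neq.
by move: e; rewrite /Ppos ec => /addnI; apply: rk_inj.
Qed.

Lemma sum_div I (r : seq I) (P : pred I) (F : I -> nat) b : 0 < b ->
  \sum_(i <- r | P i) (F i %/ b) <= (\sum_(i <- r | P i) F i) %/ b.
Proof.
move=> b0; elim/big_rec2: _ => // i x y _ h.
apply: leq_trans (leq_add (leqnn _) h) _.
by rewrite divnD // leq_addr.
Qed.

Lemma sum_cls n k (col : 'I_n -> 'I_k) : \sum_(a < k) #|cls col a| = n.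
Proof.
apply: (etrans _ (card_ord n)); rewrite -sum1_card (partition_big col xpredT) //=.
by apply: eq_bigr => a _; rewrite sum1_card; apply: eq_card => v; rewrite inE.
Qed.

Lemma Soff_bound n k (col : 'I_n -> 'I_k) b : 0 < b -> Soff col b k <= (n + k * b.-1) %/ b.
Proof.
move=> b0; rewrite /Soff (eq_bigl xpredT) => [|a]; last by rewrite ltn_ord.
apply: leq_trans (sum_div _ _ _ b0) _.
by rewrite big_split /= sum_cls sum_nat_const card_ord.
Qed.


Definition enc (q b j B s : nat) : nat := j * (q * b) + B * b + s.

Lemma enc_lt q b g j B s : j < g -> B < q -> s < b -> enc q b j B s < g * q * b.
Proof.
move=> jg Bq sb; rewrite /enc.
have h1 : B * b + s < q * b.
  apply: (@leq_trans (B * b + b)); first by rewrite ltn_add2l.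
  by rewrite -mulSnr leq_mul2r Bq orbT.
apply: (@leq_trans (j * (q * b) + q * b)); first by rewrite -addnA ltn_add2l.
by rewrite -mulSnr -mulnA leq_mul2r jg orbT.
Qed.

Lemma enc_inj q b j1 B1 s1 j2 B2 s2 : B1 < q -> B2 < q -> s1 < b -> s2 < b ->
  enc q b j1 B1 s1 = enc q b j2 B2 s2 -> [/\ j1 = j2, B1 = B2 & s1 = s2].
Proof.
move=> B1q B2q s1b s2b; rewrite /enc.
have e : forall j B s, j * (q * b) + B * b + s = (j * q + B) * b + s by move=> j B s; ring.
rewrite !e => h.
have b0 : 0 < b by lia.
have hs : s1 = s2.
  by move: (congr1 (modn^~ b) h); rewrite !modnMDl !modn_small.
have hq : j1 * q + B1 = j2 * q + B2.
  by move: (congr1 (divn^~ b) h); rewrite !divnMDl // !divn_small // !addn0.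
have q0 : 0 < q by lia.
have hB : B1 = B2.
  by move: (congr1 (modn^~ q) hq); rewrite !modnMDl !modn_small.
have hj : j1 = j2.
  by move: (congr1 (divn^~ q) hq); rewrite !divnMDl // !divn_small // !addn0.
by [].
Qed.

Lemma sqrt_ex t : exists a, a * a <= t < a.+1 * a.+1.
Proof.
elim: t => [|t [a /andP [h1 h2]]]; first by exists 0.
case: (ltnP t.+1 (a.+1 * a.+1)) => h.
  by exists a; rewrite h andbT; lia.
exists a.+1; rewrite h /=; lia.
Qed.


Definition phin (n k q b : nat) (col : 'I_n -> 'I_k) (i : nat) (v : 'I_n) : nat :=
  enc q b (Ppos col b v %/ b) (blk q i (Ppos col b v %/ b)) (Ppos col b v %% b).

Lemma phin_lt n k q b (col : 'I_n -> 'I_k) i v : 0 < b -> 0 < q -> i < q * q ->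
  phin q b col i v < ((n + k * b.-1) %/ b) * q * b.
Proof.
move=> b0 q0 iq; apply: enc_lt; last by rewrite ltn_mod.
  exact: leq_trans (Fam_tot col v b0) (Soff_bound col b0).
exact: blk_lt.
Qed.

Lemma phin_inj n k q b (col : 'I_n -> 'I_k) i v w : 0 < b -> 0 < q -> i < q * q ->
  phin q b col i v = phin q b col i w -> v = w.
Proof.
move=> b0 q0 iq; rewrite /phin => /enc_inj [] //; try (exact: blk_lt); try (by rewrite ltn_mod).
move=> e1 _ e2; apply: (@Ppos_inj _ _ col b v w b0).
by rewrite (divn_eq (Ppos col b v) b) (divn_eq (Ppos col b w) b) e1 e2.
Qed.

Lemma phin_same n k q b (col col' : 'I_n -> 'I_k) i i' v w v' w' :
  prime q -> 0 < b -> i < q * q -> i' < q * q -> (n + k * b.-1) %/ b <= q.+1 ->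
  col' v' != col' w' ->
  phin q b col' i' v' = phin q b col i v -> phin q b col' i' w' = phin q b col i w -> i = i'.
Proof.
move=> pq b0 iq iq' gq ne.
have q0 := prime_gt0 pq.
rewrite /phin => /enc_inj [] //; try (exact: blk_lt); try (by rewrite ltn_mod).
move=> ej1 eb1 _ /enc_inj [] //; try (exact: blk_lt); try (by rewrite ltn_mod).
move=> ej2 eb2 _.
have hne := Fam_neq b0 ne.
have l1 : Ppos col' b v' %/ b <= q.
  by rewrite -ltnS; apply: leq_trans gq; exact: leq_trans (Fam_tot col' v' b0) (Soff_bound col' b0).
have l2 : Ppos col' b w' %/ b <= q.
  by rewrite -ltnS; apply: leq_trans gq; exact: leq_trans (Fam_tot col' w' b0) (Soff_bound col' b0).
move: hne eb1 eb2 l1 l2; rewrite ej1 ej2.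
set j1 := Ppos col b v %/ b; set j2 := Ppos col b w %/ b => hne eb1 eb2 l1 l2.
case: (ltngtP j1 j2) => h.
- by apply/esym; apply: (blk_inj pq iq' iq h l2).
- by apply/esym; apply: (blk_inj pq iq' iq h l1).
- by move: hne; rewrite h eqxx.
Qed.


Lemma g_bound n k q a b : 2 * k <= a -> a < q -> b = (n - k) %/ (q + 2 - k) + 1 ->
  (n + k * b.-1) %/ b <= q.+1.
Proof.
move=> ka aq eb.
have [D eD] : exists D, D = q + 2 - k by eexists.
have D0 : 0 < D by lia.
have kD : k + D = q + 2 by lia.
have b0 : 0 < b by rewrite eb addn1.
have h : n - k < b * D by rewrite eb addn1 -eD; exact: ltn_ceil.
rewrite -ltnS ltn_divLR // (_ : q.+2 = k + D); last by lia.
rewrite mulnDl (mulnC D b).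
have e : k * b.-1 = k * b - k by rewrite -subn1 mulnBr muln1.
have kb : k <= k * b by rewrite leq_pmulr.
rewrite e; lia.
Qed.

Lemma cost_arith n k q a b : 0 < n -> 2 * k <= a -> a < q ->
  14 * q * (q + 2) < 15 * a * (2 * q + 4 - a) -> b = (n - k) %/ (q + 2 - k) + 1 ->
  7 * (((n + k * b.-1) %/ b) * q * b) < 15 * a * n.
Proof.
move=> n0 ka aq Cq eb.
have [D eD] : exists D, D = q + 2 - k by eexists.
have D0 : 0 < D by lia.
have kD : k + D = q + 2 by lia.
have b0 : 0 < b by rewrite eb addn1.
have [X eX] : exists X, X = b.-1 by eexists.
have XD : X * D <= n.
  have : X = (n - k) %/ D by rewrite eX eb eD addn1.
  move=> ->; apply: leq_trans (leq_trunc_div _ _) _; lia.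
set g := (n + k * b.-1) %/ b.
have f1 : g * b <= n + k * X by rewrite /g eX leq_trunc_div.
have sA : (n + k * X) * D <= n * (q + 2).
  have -> : (n + k * X) * D = n * D + k * (X * D) by ring.
  have -> : n * (q + 2) = n * D + k * n by rewrite -kD; ring.
  by rewrite leq_add2l leq_mul2l XD orbT.
have sB : 7 * q * (q + 2) < 15 * a * D.
  have : 15 * a * (2 * q + 4 - a) <= 15 * a * (2 * D) by rewrite leq_mul2l; apply/orP; right; lia.
  move=> h; have := leq_trans Cq h.
  have -> : 14 * q * (q + 2) = 2 * (7 * q * (q + 2)) by ring.
  have -> : 15 * a * (2 * D) = 2 * (15 * a * D) by ring.
  by rewrite ltn_pmul2l.
have sC : 7 * (g * q * b) * D <= 7 * q * (n * (q + 2)).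
  have -> : 7 * (g * q * b) * D = 7 * q * (g * b * D) by ring.
  rewrite leq_mul2l; apply/orP; right.
  by apply: leq_trans sA; rewrite leq_mul2r f1 orbT.
rewrite -(ltn_pmul2r D0); apply: (leq_ltn_trans sC).
have -> : 7 * q * (n * (q + 2)) = n * (7 * q * (q + 2)) by ring.
have -> : 15 * a * n * D = n * (15 * a * D) by ring.
by rewrite ltn_pmul2l.
Qed.

Local Open Scope ring_scope.

Lemma real_bound (R : rcfType) (m a t n : nat) : (7 * m < 15 * a * n)%N -> (a * a <= t)%N ->
  (m%:R : R) < 15 / 7 * Num.sqrt (t%:R) * n%:R.
Proof.
move=> h1 h2.
have e1 : ((7 * m)%:R : R) < (15 * a * n)%:R by rewrite ltr_nat.
rewrite !natrM in e1.
have e2 : (a%:R : R) <= Num.sqrt (t%:R).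
  have -> : (a%:R : R) = Num.sqrt ((a%:R) ^+ 2) by rewrite sqrtr_sqr ger0_norm ?ler0n.
  by apply: ler_wsqrtr; rewrite expr2 -natrM ler_nat.
have e3 : (a%:R : R) * n%:R <= Num.sqrt (t%:R) * n%:R by rewrite ler_wpM2r ?ler0n.
set s := Num.sqrt (t%:R) in e2 e3 *.
set A := (a%:R : R) in e1 e2 e3 *.
set N := (n%:R : R) in e1 e3 *.
set M := (m%:R : R) in e1 *.
have -> : 15 / 7 * s * N = 15 / 7 * (s * N) by ring.
have e4 : 15 * A * N = 15 * (A * N) by ring.
rewrite e4 in e1.
lra.
Qed.

End Aux.
Import Aux.

Local Open Scope ring_scope.

Theorem theorem6 (n k p t : nat) (F : 'I_t -> sgraph 'I_n) :
  (0 < n)%N ->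
  (p * (k ^ 2 - 1) <= n)%N ->
  (forall i, colorable k (F i)) ->
  (forall i, pathwidth_le (F i) p) ->
  (maxn (4 * k ^ 2) 811 <= t)%N ->
  exists2 m : nat, universal_of_size F m &
    forall R : rcfType, (m%:R : R) < 15 / 7 * Num.sqrt (t%:R) * n%:R.
Proof.
move=> n0 _ hcol _ ht.
have [col hc] := fin_all_exists hcol.
have [a /andP [ha1 ha2]] := sqrt_ex t.
have t811 : (811 <= t)%N by move: ht; rewrite geq_max => /andP [].
have tk : (4 * k ^ 2 <= t)%N by move: ht; rewrite geq_max => /andP [].
have a28 : (28 <= a)%N by nia.
have ka : (2 * k <= a)%N by nia.
have [q pq [aq Cq]] := prime_for a28.
have q0 := prime_gt0 pq.
have tq : (t <= q * q)%N by nia.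
have [b eb] : exists b, b = ((n - k) %/ (q + 2 - k) + 1)%N by eexists.
have b0 : (0 < b)%N by rewrite eb addn1.
have gq := @g_bound n k q a b ka aq eb.
set g := ((n + k * b.-1) %/ b)%N in gq.
have cost := @cost_arith n k q a b n0 ka aq Cq eb.
exists (g * q * b)%N; last by move=> R; exact: real_bound cost ha1.
have it : forall i : 'I_t, (i < q * q)%N by move=> i; exact: leq_trans (ltn_ord i) tq.
pose r := fun (x y : 'I_(g * q * b)) => [exists i : 'I_t, [exists v : 'I_n, [exists w : 'I_n,
  (phin q b (col i) i v == x) && (phin q b (col i) i w == y) && adj (F i) v w]]].
have rsym : symmetric r.
  move=> x y; apply/idP/idP => /existsP [i /existsP [v /existsP [w /andP [/andP [e1 e2] h]]]];
  by apply/existsP; exists i; apply/existsP; exists w; apply/existsP; exists v; rewrite e1 e2 adj_sym h.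
have rirr : irreflexive r.
  move=> x; apply/negbTE/negP => /existsP [i /existsP [v /existsP [w /andP [/andP [/eqP e1 /eqP e2] h]]]].
  have evw : v = w by apply: (@phin_inj _ _ q b (col i) i v w b0 q0 (it i)); rewrite e1 e2.
  by move: h; rewrite evw adj_irr.
exists (SGraph rsym rirr) => i.
have hlt : forall v, (phin q b (col i) i v < g * q * b)%N by move=> v; exact: phin_lt.
exists (fun v => Ordinal (hlt v)); split.
  by move=> v w [] /(@phin_inj _ _ q b (col i) i v w b0 q0 (it i)).
move=> x y /=; apply/idP/idP; last first.
  by move=> h; apply/existsP; exists i; apply/existsP; exists x; apply/existsP; exists y; rewrite !eqxx h.
move=> /existsP [i' /existsP [v /existsP [w /andP [/andP [/eqP e1 /eqP e2] h]]]].
have ne : col i' v != col i' w by exact: hc i' v w h.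
have ei : i = i' :> nat.
  exact: (phin_same pq b0 (it i) (it i') gq ne e1 e2).
have ei' : i = i' by apply: val_inj.
subst i'.
have -> : x = v by apply: (@phin_inj _ _ q b (col i) i x v b0 q0 (it i)); rewrite e1.
have -> : y = w by apply: (@phin_inj _ _ q b (col i) i y w b0 q0 (it i)); rewrite e2.
exact: h.
Qed.
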